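(* Let $k\ge 0$. If $\mathcal{M}$ is a matroid whose base configuration $V_{\mathcal{M}}$ has Theta rank at most $k$, then every minor $\mathcal{N}$ of $\mathcal{M}$ has base configuration of Theta rank at most $k$. Likewise, if $V_{\mathcal{M}}$ has levelness at most $k$, then so does $V_{\mathcal{N}}$ for every minor $\mathcal{N}$ of $\mathcal{M}$.
   Context: For a matroid $\mathcal{M}=(E,\mathcal{B})$ with set of bases $\mathcal{B}$, the base configuration is $V_{\mathcal{M}}=\{\mathbf{1}_B:B\in\mathcal{B}\}\subset\mathbb{R}^E$ ($\mathbf{1}_B$ the characteristic vector). Minors are obtained by sequences of deletions and contractions (deleting a coloop $e$ gives bases $\{B\setminus e\}$; contracting a loop is defined dually). A point configuration is a finite set $V\subset\mathbb{R}^n$; a linear function means an affine function. A linear function $\ell$ nonnegative on $V$ is $k$-sos with respect to $V$ if $\ell(v)=\sum_i h_i(v)^2$ for all $v\in V$ for some polynomials $h_i$ of degree $\le k$. The Theta rank of $V$ is the smallest $k\ge 0$ such that every linear function nonnegative on $V$ is $k$-sos. For $\ell$ nonnegative on $V$, $\{v\in V:\ell(v)=0\}$ is a face; inclusion-maximal faces different from $V$ are facets and the corresponding $\ell$ facet-defining. The levelness of $V$ is the smallest $k$ such that every facet-defining linear function takes at most $k$ distinct values on $V$. *)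

(* Defs.v *)
From HB Require Import structures.
From mathcomp Require Import all_boot all_order all_algebra.
From mathcomp Require Import reals.
Set Implicit Arguments. Unset Strict Implicit. Unset Printing Implicit Defensive.
Import Order.TTheory GRing.Theory Num.Theory.
Local Open Scope ring_scope.

(* list of points (its set of elements).                                     *)
Section PointConfig.
Variables (R : realType) (I : finType).
Notation pt := {ffun I -> R}.

Definition aff (a0 : R) (a : pt) (v : pt) : R := a0 + \sum_i a i * v i.

(* Exponent vectors of monomials of degree <= k (each exponent is <= k). *)
Definition expvec (k : nat) := {ffun I -> 'I_k.+1}.

(* The polynomial function of degree <= k with coefficients c, i.e.
   v |-> sum_{m, |m| <= k} c_m * prod_i v_i^{m_i}. Every real polynomial of
   degree <= k in the coordinates arises this way. *)
Definition polyfun (k : nat) (c : expvec k -> R) (v : pt) : R :=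
  \sum_(m : expvec k | (\sum_i (m i : nat) <= k)%N) c m * \prod_i v i ^+ m i.

Definition nonneg_on (V : seq pt) (l : pt -> R) : Prop :=
  forall v, v \in V -> 0 <= l v.

Definition k_sos (V : seq pt) (k : nat) (l : pt -> R) : Prop :=
  exists hs : seq (expvec k -> R),
    forall v, v \in V -> l v = \sum_(h <- hs) polyfun h v ^+ 2.

Definition all_lin_k_sos (V : seq pt) (k : nat) : Prop :=
  forall (a0 : R) (a : pt), nonneg_on V (aff a0 a) -> k_sos V k (aff a0 a).

(* Theta rank of V is at most k: the smallest j with the above property is
   <= k, i.e. some j <= k has the property. *)
Definition theta_rank_le (V : seq pt) (k : nat) : Prop :=
  exists2 j, (j <= k)%N & all_lin_k_sos V j.

Definition is_face (V : seq pt) (F : pt -> bool) : Prop :=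
  exists (a0 : R) (a : pt), nonneg_on V (aff a0 a) /\
    forall v, F v = (v \in V) && (aff a0 a v == 0).

Definition proper_face (V : seq pt) (F : pt -> bool) : Prop :=
  is_face V F /\ exists2 v, v \in V & ~~ F v.

Definition is_facet (V : seq pt) (F : pt -> bool) : Prop :=
  proper_face V F /\
  forall G, proper_face V G -> (forall v, F v -> G v) -> (forall v, G v -> F v).

Definition facet_defining (V : seq pt) (a0 : R) (a : pt) : Prop :=
  nonneg_on V (aff a0 a) /\
  is_facet V (fun v => (v \in V) && (aff a0 a v == 0)).

Definition all_facets_j_level (V : seq pt) (j : nat) : Prop :=
  forall (a0 : R) (a : pt), facet_defining V a0 a ->
    (size (undup [seq aff a0 a v | v <- V]) <= j)%N.

Definition levelness_le (V : seq pt) (k : nat) : Prop :=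
  exists2 j, (j <= k)%N & all_facets_j_level V j.

End PointConfig.

Section Matroids.
Variable E : finType.

Definition is_matroid (S : {set E}) (Bs : {set {set E}}) : Prop :=
  [/\ exists B, B \in Bs,
      forall B, B \in Bs -> B \subset S &
      forall B1 B2 x, B1 \in Bs -> B2 \in Bs -> x \in B1 :\: B2 ->
        exists2 y, y \in B2 :\: B1 & (y |: (B1 :\ x)) \in Bs].

Definition is_coloop (Bs : {set {set E}}) (e : E) : bool := [forall B in Bs, e \in B].
Definition is_loop (Bs : {set {set E}}) (e : E) : bool := [forall B in Bs, e \notin B].

Definition deletion (Bs : {set {set E}}) (e : E) : {set {set E}} :=
  if is_coloop Bs e then [set B :\ e | B in Bs] else [set B in Bs | e \notin B].

Definition contraction (Bs : {set {set E}}) (e : E) : {set {set E}} :=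
  if is_loop Bs e then Bs else [set B :\ e | B in [set B in Bs | e \in B]].

Inductive minor_of (S : {set E}) (Bs : {set {set E}}) :
  {set E} -> {set {set E}} -> Prop :=
| minor_refl : minor_of S Bs S Bs
| minor_del S' Bs' e : minor_of S Bs S' Bs' -> e \in S' ->
    minor_of S Bs (S' :\ e) (deletion Bs' e)
| minor_con S' Bs' e : minor_of S Bs S' Bs' -> e \in S' ->
    minor_of S Bs (S' :\ e) (contraction Bs' e).

Definition base_config (R : realType) (S : {set E}) (Bs : {set {set E}})
  : seq {ffun {x : E | x \in S} -> R} :=
  [seq [ffun i : {x : E | x \in S} => if val i \in B then 1 else 0] | B : {set E} <- enum Bs].

End Matroids.

(* Main.v *)
Require Import Defs.
From HB Require Import structures.
From mathcomp Require Import all_boot all_order all_algebra.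
From mathcomp Require Import reals.
From Stdlib Require Import Classical.
Set Implicit Arguments. Unset Strict Implicit. Unset Printing Implicit Defensive.
Import Order.TTheory GRing.Theory Num.Theory.
Local Open Scope ring_scope.

Section Gen.
Variables (R : realType) (I : finType).
Notation pt := {ffun I -> R}.

Lemma aff_comb b0 (b : pt) c0 (c : pt) (s : R) v :
  aff (b0 + s * c0) [ffun i => b i + s * c i] v = aff b0 b v + s * aff c0 c v.
Proof.
rewrite /aff (eq_bigr (fun i => b i * v i + s * (c i * v i))); last first.
  by move=> i _; rewrite ffunE mulrDl mulrA.
rewrite big_split /= -mulr_sumr mulrDr addrACA.
by [].
Qed.

Lemma exists_argmin (T : eqType) (s : seq T) (f : T -> R) :
  s != [::] -> exists2 x, x \in s & forall y, y \in s -> f x <= f y.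
Proof.
elim: s => // a s IH _; case: (altP (s =P [::])) => [->|ns].
  by exists a => [|y]; rewrite ?inE // => /eqP->.
have [x xs Hx] := IH ns; case: (lerP (f a) (f x)) => H.
  exists a; rewrite ?inE ?eqxx // => y; rewrite inE => /orP[/eqP->//|/Hx].
  exact: le_trans.
exists x; rewrite ?inE ?xs ?orbT // => y; rewrite inE => /orP[/eqP->|/Hx//].
exact: ltW.
Qed.

Lemma rigid_neg (V : seq pt) a0 (a : pt) m0 (m : pt) :
  facet_defining V a0 a ->
  (forall w, w \in V -> aff a0 a w = 0 -> aff m0 m w = 0) ->
  (exists2 w, w \in V & aff m0 m w < 0) ->
  exists lam, forall w, w \in V -> aff m0 m w = lam * aff a0 a w.
Proof.
move=> [nn [[_ _] mx]] Hz Hneg.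
have ne : [seq w <- V | aff m0 m w < 0] != [::].
  case: Hneg => w wV wn; apply/negP => /eqP E.
  by have := mem_filter (fun w => aff m0 m w < 0) w V; rewrite E wn wV.
have [ws] := exists_argmin (fun w => aff a0 a w / (- aff m0 m w)) ne.
rewrite mem_filter => /andP[wsn wsV] Hmin.
have lpos : 0 < aff a0 a ws.
  rewrite lt_def nn // andbT; apply/eqP => E; move: (Hz _ wsV E) wsn => ->.
  by rewrite ltxx.
set s0 := aff a0 a ws / (- aff m0 m ws).
have s0pos : 0 < s0 by rewrite divr_gt0 // oppr_gt0.
have Nnn : nonneg_on V (aff (a0 + s0 * m0) [ffun i => a i + s0 * m i]).
  move=> w wV; rewrite aff_comb.
  case: (ltP (aff m0 m w) 0) => hm.
    have := Hmin w; rewrite mem_filter hm wV => /(_ isT).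
    rewrite ler_pdivlMr ?oppr_gt0 // mulrN -/s0 => H.
    by rewrite -subr_ge0 opprK in H.
  by rewrite addr_ge0 ?nn // mulr_ge0 // ltW.
have := mx (fun v => (v \in V) && (aff (a0 + s0 * m0) [ffun i => a i + s0 * m i] v == 0)).
move=> H.
have allz : forall w, w \in V -> aff a0 a w + s0 * aff m0 m w = 0.
  move=> w wV; apply: NNPP => nz.
  have P : proper_face V (fun v => (v \in V) &&
        (aff (a0 + s0 * m0) [ffun i => a i + s0 * m i] v == 0)).
    split; first by exists (a0 + s0 * m0), [ffun i => a i + s0 * m i].
    by exists w; rewrite // wV aff_comb /=; apply/eqP.
  have sub : forall v, (v \in V) && (aff a0 a v == 0) ->
     (v \in V) && (aff (a0 + s0 * m0) [ffun i => a i + s0 * m i] v == 0).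
    move=> v /andP[vV /eqP av].
    by rewrite vV aff_comb av (Hz _ vV av) mulr0 addr0 eqxx.
  have Gws : (ws \in V) && (aff (a0 + s0 * m0) [ffun i => a i + s0 * m i] ws == 0).
    have mn0 : aff m0 m ws != 0 by rewrite lt_eqF.
    by rewrite wsV aff_comb /s0 -mulrA invrN mulNr (mulVf mn0) mulrN1 subrr eqxx.
  by move: (H P sub ws Gws) => /andP[_ /eqP E]; move: lpos; rewrite E ltxx.
exists (- s0^-1) => w wV; have := allz w wV => E.
apply: (mulfI (lt0r_neq0 s0pos)).
rewrite mulrA mulrN divrr ?unitfE ?lt0r_neq0 // mulN1r.
by apply/eqP; rewrite -addr_eq0 addrC E.
Qed.


Lemma aff_neg m0 (m : pt) v : aff (- m0) [ffun i => - m i] v = - aff m0 m v.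
Proof.
rewrite /aff opprD -sumrN; congr (_ + _); apply: eq_bigr => i _.
by rewrite ffunE mulNr.
Qed.

Lemma rigid (V : seq pt) a0 (a : pt) m0 (m : pt) :
  facet_defining V a0 a ->
  (forall w, w \in V -> aff a0 a w = 0 -> aff m0 m w = 0) ->
  exists lam, forall w, w \in V -> aff m0 m w = lam * aff a0 a w.
Proof.
move=> Hf Hz.
case: (classic (exists2 w, w \in V & aff m0 m w < 0)) => Hn.
  exact: rigid_neg.
case: (classic (exists2 w, w \in V & 0 < aff m0 m w)) => Hp.
  have H1 : forall w, w \in V -> aff a0 a w = 0 -> aff (- m0) [ffun i => - m i] w = 0.
    by move=> w wV /(Hz w wV); rewrite aff_neg => ->; rewrite oppr0.
  have H2 : exists2 w, w \in V & aff (- m0) [ffun i => - m i] w < 0.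
    by case: Hp => w wV wp; exists w; rewrite // aff_neg oppr_lt0.
  have [lam Hl] := rigid_neg Hf H1 H2.
  exists (- lam) => w wV; by rewrite mulNr -Hl // aff_neg opprK.
exists 0 => w wV; rewrite mul0r.
case: (ltgtP (aff m0 m w) 0) => // H.
- by case: Hn; exists w.
- by case: Hp; exists w.
Qed.

Lemma count_le_in (T : eqType) (s : seq T) (P1 P2 : pred T) :
  {in s, forall x, P2 x -> P1 x} -> (count P2 s <= count P1 s)%N.
Proof.
elim: s => // y s IH Hs /=; apply: leq_add.
  by case P2y: (P2 y) => //; rewrite (Hs y) // inE eqxx.
by apply: IH => z zs; apply: Hs; rewrite inE zs orbT.
Qed.

Lemma count_lt (T : eqType) (s : seq T) (P1 P2 : pred T) :
  {in s, forall x, P2 x -> P1 x} -> (exists2 x, x \in s & P1 x && ~~ P2 x) ->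
  (count P2 s < count P1 s)%N.
Proof.
elim: s => [_ [x]//|y s IH] Hs [x]; rewrite inE => /orP[/eqP->|xs] Hx /=.
  case/andP: Hx => -> /negbTE ->; rewrite add0n add1n ltnS.
  by apply: count_le_in => z zs; apply: Hs; rewrite inE zs orbT.
have Hs' : {in s, forall x, P2 x -> P1 x}.
  by move=> z zs; apply: Hs; rewrite inE zs orbT.
have := IH Hs' (ex_intro2 _ _ x xs Hx).
have : (P2 y <= P1 y)%N.
  by case P2y: (P2 y) => //; rewrite (Hs y) // inE eqxx.
move=> h1 h2; rewrite -addnS; exact: leq_add h1 h2.
Qed.

Lemma extend (V : seq pt) p : p \in V -> forall b0 (b : pt),
  nonneg_on V (aff b0 b) -> 0 < aff b0 b p ->
  exists M0 M, [/\ facet_defining V M0 M, 0 < aff M0 M p &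
     forall v, v \in V -> aff b0 b v = 0 -> aff M0 M v = 0].
Proof.
move=> pV b0 b.
have [n] := ubnP (count (fun v => aff b0 b v != 0) V).
elim: n b0 b => [|n IH] b0 b; first by rewrite ltn0.
rewrite ltnS => Hn nn bp.
case: (classic (facet_defining V b0 b)) => Hf.
  by exists b0, b; split.
have PF : proper_face V (fun v => (v \in V) && (aff b0 b v == 0)).
  split; first by exists b0, b.
  by exists p; rewrite // pV /= lt0r_neq0.
have : ~ (forall G, proper_face V G ->
   (forall v, (v \in V) && (aff b0 b v == 0) -> G v) ->
   forall v, G v -> (v \in V) && (aff b0 b v == 0)).
  by move=> H; apply: Hf; split.
move=> H0. have [G H00] := not_all_ex_not _ _ H0. have [PG H1] := imply_to_and _ _ H00.
have [sub H2] := imply_to_and _ _ H1.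
have [u H3] := not_all_ex_not _ _ H2. have [Gu nFu] := imply_to_and _ _ H3.
case: PG => [[m0 [m [mnn Gdef]]] [u' u'V nGu']].
have zsub : forall v, v \in V -> aff b0 b v = 0 -> aff m0 m v = 0.
  move=> v vV bv; have := sub v; rewrite vV bv eqxx Gdef => /(_ isT).
  by case/andP => _ /eqP.
have [uV mu] : u \in V /\ aff m0 m u = 0.
  by move: Gu; rewrite Gdef => /andP[-> /eqP].
have bu : aff b0 b u != 0 by move: nFu; rewrite uV /= => /negP.
case: (altP (aff m0 m p =P 0)) => mp; last first.
  have mpos : 0 < aff m0 m p by rewrite lt_def mp mnn.
  have [|M0 [M [HM1 HM2 HM3]]] := IH m0 m _ mnn mpos.
    apply: leq_trans Hn; apply: count_lt.
      move=> v vV; apply: contra => /eqP bv; apply/eqP; exact: zsub.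
    by exists u; rewrite // bu mu eqxx.
  exists M0, M; split => // v vV bv; apply: HM3 => //; exact: zsub.
have ne : [seq v <- V | 0 < aff m0 m v] != [::].
  have mu' : 0 < aff m0 m u'.
    rewrite lt_def mnn // andbT; move: nGu'; rewrite Gdef u'V //.
  apply/negP => /eqP E.
  by have := mem_filter (fun v => 0 < aff m0 m v) u' V; rewrite E mu' u'V.
have [w] := exists_argmin (fun v => aff b0 b v / aff m0 m v) ne.
rewrite mem_filter => /andP[mw wV] Hmin.
set s0 := aff b0 b w / aff m0 m w.
have Nnn : nonneg_on V (aff (b0 + (- s0) * m0) [ffun i => b i + (- s0) * m i]).
  move=> v vV; rewrite aff_comb mulNr subr_ge0.
  case: (ltP 0 (aff m0 m v)) => hm.
    have := Hmin v; rewrite mem_filter hm vV => /(_ isT).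
    by rewrite ler_pdivlMr.
  have -> : aff m0 m v = 0 by apply/eqP; rewrite eq_le hm mnn.
  by rewrite mulr0 nn.
have Np : 0 < aff (b0 + (- s0) * m0) [ffun i => b i + (- s0) * m i] p.
  by rewrite aff_comb mp mulr0 addr0.
have [|M0 [M [HM1 HM2 HM3]]] := IH _ _ _ Nnn Np.
  apply: leq_trans Hn; apply: count_lt.
    move=> v vV; apply: contra => /eqP bv.
    by rewrite aff_comb bv (zsub v vV bv) mulr0 addr0.
  have mw0 : aff m0 m w != 0 := lt0r_neq0 mw.
  have Nw : aff (b0 + (- s0) * m0) [ffun i => b i + (- s0) * m i] w = 0.
    by rewrite aff_comb /s0 mulNr -mulrA (mulVf mw0) mulr1 subrr.
  have bw : aff b0 b w != 0.
    by apply/eqP => bw; move: (zsub w wV bw) mw0 => ->; rewrite eqxx.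
  by exists w => //; rewrite bw Nw eqxx.
exists M0, M; split => // v vV bv; apply: HM3 => //.
by rewrite aff_comb bv (zsub v vV bv) mulr0 addr0.
Qed.
End Gen.

Section Proj.
Variables (R : realType) (I J : finType) (sigma : J -> I) (tau : I -> option J) (e0 : I).
Hypothesis Hts : forall j, tau (sigma j) = Some j.
Hypothesis HtN : forall i, tau i = None -> i = e0.
Hypothesis HtS : forall i j, tau i = Some j -> sigma j = i.
Hypothesis HtE : tau e0 = None.

Lemma big_e0 (T : Type) (idx : T) (op : Monoid.com_law idx) (F : I -> T) :
  \big[op/idx]_i F i = op (F e0) (\big[op/idx]_j F (sigma j)).
Proof.
rewrite (bigD1 e0) //=; congr (op _ _).
rewrite (reindex_omap sigma tau); last first.
  move=> i ie; case E: (tau i) => [j|] /=; first by rewrite (HtS E).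
  by move: ie; rewrite (HtN E) eqxx.
apply: eq_bigl => j; rewrite Hts eqxx andbT.
by apply/eqP => E; move: (Hts j); rewrite E HtE.
Qed.

Definition piv (v : {ffun I -> R}) : {ffun J -> R} := [ffun j => v (sigma j)].
Definition lifta (a : {ffun J -> R}) : {ffun I -> R} := [ffun i => oapp a 0 (tau i)].

Lemma aff_lift a0 (a : {ffun J -> R}) (v : {ffun I -> R}) : aff a0 (lifta a) v = aff a0 a (piv v).
Proof.
rewrite /aff big_e0 /lifta ffunE HtE /= mul0r add0r; congr (_ + _).
by apply: eq_bigr => j _; rewrite !ffunE Hts.
Qed.

Lemma aff_restr (c : R) M0 (M : {ffun I -> R}) (v : {ffun I -> R}) : v e0 = c ->
  aff M0 M v = aff (M0 + M e0 * c) [ffun j => M (sigma j)] (piv v).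
Proof.
move=> vc; rewrite /aff big_e0 vc addrA; congr (_ + _).
by apply: eq_bigr => j _; rewrite !ffunE.
Qed.

Definition resm k (m : expvec I k) : expvec J k := [ffun j => m (sigma j)].

Definition push k (c : R) (h : expvec I k -> R) (m' : expvec J k) : R :=
  \sum_(m : expvec I k | ((\sum_i (m i : nat) <= k)%N) && (resm m == m')) h m * c ^+ m e0.

Lemma push_ok k (c : R) (h : expvec I k -> R) (v : {ffun I -> R}) : v e0 = c -> polyfun (push c h) (piv v) = polyfun h v.
Proof.
move=> vc; rewrite /polyfun.
rewrite (partition_big (@resm k) (fun m' : expvec J k => (\sum_j (m' j : nat) <= k)%N)); last first.
  move=> m Hm; apply: leq_trans Hm; rewrite [X in (_ <= X)%N](big_e0 addn).
  rewrite (eq_bigr (fun j => (m (sigma j) : nat))) ?leq_addl //.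
  by move=> j _; rewrite ffunE.
apply: eq_bigr => m' _; rewrite /push mulr_suml; apply: eq_bigr => m /andP[_ /eqP <-].
rewrite -mulrA; congr (_ * _).
rewrite [X in _ = X](@big_e0 R 1 *%R) /= vc; congr (_ * _).
by apply: eq_bigr => j _; rewrite !ffunE.
Qed.

Definition gvec (c : R) : {ffun I -> R} := [ffun i => if i == e0 then 1 - 2 * c else 0].
Definition g0 (c : R) : R := - ((1 - 2 * c) * c).

Lemma g_val (c : R) (v : {ffun I -> R}) : (c = 0 \/ c = 1) -> (v e0 = 0 \/ v e0 = 1) ->
  aff (g0 c) (gvec c) v = if v e0 == c then 0 else 1.
Proof.
move=> Hc Hv.
have -> : aff (g0 c) (gvec c) v = (1 - 2 * c) * (v e0 - c).
  rewrite /aff (bigD1 e0) //= big1 ?addr0; last first.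
    by move=> i /negbTE ie; rewrite ffunE ie mul0r.
  by rewrite ffunE eqxx /g0 mulrDr mulrN addrC.
case: Hc => ->; case: Hv => ->; rewrite ?eqxx ?subrr ?mulr0 //.
  by rewrite oner_eq0 !subr0 mulr1.
by rewrite eq_sym oner_eq0 mulr1 sub0r -[2]/(1 + 1) opprD addrA subrr sub0r mulrNN mulr1.
Qed.

Lemma abs_le_sum (V : seq {ffun I -> R}) (f : {ffun I -> R} -> R) v :
  v \in V -> `|f v| <= \sum_(u <- V) `|f u|.
Proof.
by move=> vV; rewrite (big_rem v) //= lerDl sumr_ge0.
Qed.

Section Core.
Variables (V : seq {ffun I -> R}) (W : seq {ffun J -> R}) (c : R).
Hypothesis Hc : c = 0 \/ c = 1.
Hypothesis HV01 : forall v, v \in V -> v e0 = 0 \/ v e0 = 1.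
Hypothesis HW : forall w, w \in W <-> exists2 v, v \in V & (v e0 = c /\ w = piv v).

Definition Tsum a0 (a : {ffun J -> R}) := \sum_(u <- V) `|aff a0 (lifta a) u|.
Definition Lc a0 (a : {ffun J -> R}) := a0 + Tsum a0 a * g0 c.
Definition Lv a0 (a : {ffun J -> R}) : {ffun I -> R} :=
  [ffun i => lifta a i + Tsum a0 a * gvec c i].

Lemma L_val a0 a v : v \in V ->
  aff (Lc a0 a) (Lv a0 a) v = aff a0 a (piv v) + Tsum a0 a * (if v e0 == c then 0 else 1).
Proof. by move=> vV; rewrite aff_comb aff_lift g_val //; apply: HV01. Qed.

Lemma L_nn a0 a : nonneg_on W (aff a0 a) -> nonneg_on V (aff (Lc a0 a) (Lv a0 a)).
Proof.
move=> nnW v vV; rewrite L_val //; case: eqP => ve.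
  rewrite mulr0 addr0; apply: nnW; apply/HW; by exists v.
rewrite mulr1 -aff_lift -(opprK (Tsum a0 a)) subr_ge0.
rewrite lerNl; apply: le_trans _ (abs_le_sum (fun u => aff a0 (lifta a) u) vV).
by rewrite -normrN ler_norm.
Qed.

Lemma theta_core k : all_lin_k_sos V k -> all_lin_k_sos W k.
Proof.
move=> HVk a0 a nnW.
have [hs Hhs] := HVk _ _ (L_nn nnW).
exists (map (push c) hs) => w /HW [v vV [vc ->]].
have := Hhs v vV; rewrite L_val // vc eqxx mulr0 addr0 => ->.
by rewrite big_map; apply: eq_bigr => h _; rewrite push_ok.
Qed.

Lemma level_core j : all_facets_j_level V j -> all_facets_j_level W j.
Proof.
move=> HVj a0 a Hfd.
have Hfd' := Hfd; case: Hfd' => nnW [[_ [wp wpW nwp]] _].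
have wpp : 0 < aff a0 a wp by rewrite lt_def nnW // andbT; move: nwp; rewrite wpW.
case/HW: (wpW) => vp vpV [vpc wpE].
have Lp : 0 < aff (Lc a0 a) (Lv a0 a) vp.
  by rewrite L_val // vpc eqxx mulr0 addr0 -wpE.
have [M0 [M [HM1 HM2 HM3]]] := extend vpV (L_nn nnW) Lp.
set mW0 := M0 + M e0 * c; set mW := [ffun j => M (sigma j)].
have Hm : forall v, v \in V -> v e0 = c -> aff M0 M v = aff mW0 mW (piv v).
  by move=> v _ vc; rewrite (aff_restr M0 M vc).
have [lam Hlam] : exists lam, forall w, w \in W -> aff mW0 mW w = lam * aff a0 a w.
  apply: rigid Hfd _ => w /HW [v vV [vc ->]] z.
  rewrite -Hm // HM3 //; by rewrite L_val // vc eqxx mulr0 addr0.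
have lam0 : lam != 0.
  apply/eqP => l0; move: (Hlam wp wpW); rewrite l0 mul0r wpE -Hm // => E.
  by move: HM2; rewrite E ltxx.
have -> : size (undup [seq aff a0 a v | v <- W]) = size (undup [seq aff mW0 mW v | v <- W]).
  have -> : [seq aff mW0 mW v | v <- W] = map ( *%R lam) [seq aff a0 a v | v <- W].
    by rewrite -map_comp; apply/eq_in_map => w wW /=; rewrite Hlam.
  by rewrite (undup_map_inj (mulfI lam0)) size_map.
apply: leq_trans (HVj _ _ HM1).
apply: uniq_leq_size; first exact: undup_uniq.
move=> x; rewrite mem_undup => /mapP [w /HW [v vV [vc ->]] ->].
by rewrite mem_undup -Hm //; apply: map_f.
Qed.
End Core.
End Proj.

Section Mat.
Variables (R : realType) (E : finType).

Definition chi (S : {set E}) (B : {set E}) : {ffun {x : E | x \in S} -> R} :=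
  [ffun i : {x : E | x \in S} => if val i \in B then 1 else 0].

Lemma mem_bc S Bs w : w \in base_config R S Bs <-> exists2 B, B \in Bs & w = chi S B.
Proof.
split; first by case/mapP => B; rewrite mem_enum => BB ->; exists B.
by case=> B BB ->; apply/mapP; exists B; rewrite ?mem_enum.
Qed.

Section Step.
Variables (S : {set E}) (e : E) (He : e \in S).
Let I := {x : E | x \in S}.
Let J := {x : E | x \in S :\ e}.

Lemma sig_in (j : J) : val j \in S.
Proof. by case: j => x /=; rewrite in_setD1 => /andP[]. Qed.

Definition sg (j : J) : I := exist _ (val j) (sig_in j).
Definition ta (i : I) : option J := insub (val i).
Definition e0 : I := exist _ e He.

Lemma Hts' j : ta (sg j) = Some j.
Proof. by rewrite /ta /sg /= valK. Qed.

Lemma HtN' i : ta i = None -> i = e0.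
Proof.
rewrite /ta; case: insubP => [u _ _ //|H _]; apply: val_inj => /=.
by move: H; rewrite in_setD1 (valP i) andbT negbK => /eqP.
Qed.

Lemma HtS' i j : ta i = Some j -> sg j = i.
Proof.
rewrite /ta; case: insubP => [u _ Hu [Eu]|//]; apply: val_inj => /=.
by rewrite -Hu Eu.
Qed.

Lemma HtE' : ta e0 = None.
Proof. by rewrite /ta insubF // in_setD1 eqxx. Qed.

Lemma chi_e0 B : chi S B e0 = if e \in B then 1 else 0.
Proof. by rewrite ffunE. Qed.

Lemma piv_chi B : piv sg (chi S B) = chi (S :\ e) B.
Proof. by apply/ffunP => j; rewrite !ffunE. Qed.

Lemma chiD1 B : chi (S :\ e) (B :\ e) = chi (S :\ e) B.
Proof.
apply/ffunP => j; rewrite !ffunE in_setD1.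
by case: j => x /=; rewrite in_setD1 => /andP[-> _].
Qed.

Lemma step (k : nat) (Bs Bs2 : {set {set E}}) (c : R) : (c = 0 \/ c = 1) ->
  (forall w, w \in base_config R (S :\ e) Bs2 <->
     exists2 B, B \in Bs & ((if e \in B then 1 else 0) = c /\ w = chi (S :\ e) B)) ->
  (theta_rank_le (base_config R S Bs) k -> theta_rank_le (base_config R (S :\ e) Bs2) k) /\
  (levelness_le (base_config R S Bs) k -> levelness_le (base_config R (S :\ e) Bs2) k).
Proof.
move=> Hc Hsp.
have HV01 : forall v, v \in base_config R S Bs -> v e0 = 0 \/ v e0 = 1.
  by move=> v /mem_bc [B _ ->]; rewrite chi_e0; case: (e \in B); [right|left].
have HW : forall w, w \in base_config R (S :\ e) Bs2 <->
    exists2 v, v \in base_config R S Bs & (v e0 = c /\ w = piv sg v).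
  move=> w; rewrite Hsp; split.
    case=> B BB [Bc ->]; exists (chi S B); first by apply/mem_bc; exists B.
    by rewrite chi_e0 piv_chi.
  case=> v /mem_bc [B BB ->]; rewrite chi_e0 piv_chi => H; by exists B.
split.
  case=> j jk Hj; exists j => //.
  exact: (theta_core Hts' HtN' HtS' HtE' Hc HV01 HW).
case=> j jk Hj; exists j => //.
exact: (level_core Hts' HtN' HtS' HtE' Hc HV01 HW).
Qed.

Lemma if10 (b : bool) : ((if b then 1 else 0 : R) = 1 <-> b) /\ ((if b then 1 else 0 : R) = 0 <-> ~~ b).
Proof. by case: b; split; split => //; move/eqP; rewrite ?oner_eq0 // eq_sym oner_eq0. Qed.

Lemma spec_del (Bs : {set {set E}}) : exists c : R, (c = 0 \/ c = 1) /\
  forall w, w \in base_config R (S :\ e) (deletion Bs e) <->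
     exists2 B, B \in Bs & ((if e \in B then 1 else 0) = c /\ w = chi (S :\ e) B).
Proof.
rewrite /deletion; case: ifP => col.
  exists 1; split; first by right.
  move=> w; rewrite mem_bc; split.
    case=> B2 /imsetP [B BB ->] ->; exists B => //; rewrite chiD1; split => //.
    by apply/(proj1 (if10 _)); move/forall_inP: col; apply.
  case=> B BB [_ ->]; exists (B :\ e); first by apply: imset_f.
  by rewrite chiD1.
exists 0; split; first by left.
move=> w; rewrite mem_bc; split.
  by case=> B; rewrite inE => /andP[BB eB] ->; exists B => //; split => //; apply/(proj2 (if10 _)).
case=> B BB [/(proj2 (if10 _)) eB ->]; exists B => //; by rewrite inE BB.
Qed.

Lemma spec_con (Bs : {set {set E}}) : exists c : R, (c = 0 \/ c = 1) /\
  forall w, w \in base_config R (S :\ e) (contraction Bs e) <->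
     exists2 B, B \in Bs & ((if e \in B then 1 else 0) = c /\ w = chi (S :\ e) B).
Proof.
rewrite /contraction; case: ifP => lp.
  exists 0; split; first by left.
  move=> w; rewrite mem_bc; split.
    case=> B BB ->; exists B => //; split => //; apply/(proj2 (if10 _)).
    by move/forall_inP: lp; apply.
  by case=> B BB [_ ->]; exists B.
exists 1; split; first by right.
move=> w; rewrite mem_bc; split.
  case=> B2 /imsetP [B]; rewrite inE => /andP[BB eB] -> ->; exists B => //.
  by rewrite chiD1; split => //; apply/(proj1 (if10 _)).
case=> B BB [/(proj1 (if10 _)) eB ->]; exists (B :\ e); last by rewrite chiD1.
by apply: imset_f; rewrite inE BB.
Qed.
End Step.
End Mat.

Theorem theorem2p11 (R : realType) (E : finType) (S : {set E})
    (Bs : {set {set E}}) (k : nat) :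
  is_matroid S Bs ->
  (theta_rank_le (base_config R S Bs) k ->
     forall S' Bs', minor_of S Bs S' Bs' -> theta_rank_le (base_config R S' Bs') k) /\
  (levelness_le (base_config R S Bs) k ->
     forall S' Bs', minor_of S Bs S' Bs' -> levelness_le (base_config R S' Bs') k).
Proof.
move=> _; split => H S' Bs' M; elim: M => //.
- move=> S2 Bs2 e _ IH He; have [c [Hc Hs]] := spec_del R S2 e Bs2.
  exact: (proj1 (step He k Hc Hs)).
- move=> S2 Bs2 e _ IH He; have [c [Hc Hs]] := spec_con R S2 e Bs2.
  exact: (proj1 (step He k Hc Hs)).
- move=> S2 Bs2 e _ IH He; have [c [Hc Hs]] := spec_del R S2 e Bs2.
  exact: (proj2 (step He k Hc Hs)).
- move=> S2 Bs2 e _ IH He; have [c [Hc Hs]] := spec_con R S2 e Bs2.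
  exact: (proj2 (step He k Hc Hs)).
Qed.
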